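(* Let $r:\mathcal V\to\mathbb P(\mathcal L)$ be a discrete Ribaucour sphere congruence and $u$ a totally umbilic envelope of $r$ with point sphere map $u^p$. Then for every face $(ijkl)$ the face cross-ratios coincide: $\mathrm{cr}(r_i,r_j,r_k,r_l)=\mathrm{cr}(u^p_i,u^p_j,u^p_k,u^p_l)$. In particular, $u^p$ is isothermic if and only if $r$ is isothermic.
   Context: $\mathbb{R}^{4,2}$ is $\mathbb R^6$ with a symmetric bilinear form $\langle\cdot,\cdot\rangle$ of signature $(4,2)$, $\mathcal L$ its light cone, $\mathbb P(\mathcal L)$ the set of oriented spheres; black letters denote homogeneous coordinates. A point sphere complex $\mathfrak p$, $\langle\mathfrak p,\mathfrak p\rangle=-1$, is fixed; point spheres are spheres orthogonal to $\mathfrak p$; each contact element (2-dim totally null subspace) contains exactly one point sphere. $\mathcal V$ is the vertex set of a simply connected subset of $\mathbb Z^2$; faces $(ijkl)$ are listed in cyclic order. A discrete Legendre map is a map $f$ from $\mathcal V$ to contact elements with adjacent contact elements sharing a sphere (its curvature sphere on that edge); it envelops a sphere congruence $r$ if $r_i\in f_i$. A discrete Legendre map is totally umbilic if all its curvature spheres coincide (a constant sphere $n$) and its point sphere map is a circular net for any choice of point sphere complex; a totally umbilic envelope of $r$ then has the form $u_i=\langle\!\langle\mathfrak n,\mathfrak r_i\rangle\!\rangle$. A discrete Ribaucour sphere congruence is a non-degenerate discrete conjugate net $r:\mathcal V\to\mathbb P(\mathcal L)$ (the coordinates of the four spheres of each face span a 3-dim subspace of signature $(2,1)$ or $(1,2)$).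 The cross-ratio of four spheres or point spheres is $\mathrm{cr}(s_1,s_2,s_3,s_4)=\frac{\langle\mathfrak s_1,\mathfrak s_2\rangle\langle\mathfrak s_3,\mathfrak s_4\rangle}{\langle\mathfrak s_2,\mathfrak s_3\rangle\langle\mathfrak s_4,\mathfrak s_1\rangle}$. A map $x:\mathcal V\to\mathbb P(\mathcal L)$ with planar faces is isothermic if there is a function $a$ on edges, taking equal values on opposite edges of every face, such that $\mathrm{cr}(x_i,x_j,x_k,x_l)=a_{ij}/a_{jk}$ on every face $(ijkl)$. *)

(* Defs.v *)
From mathcomp Require Import all_boot all_order all_algebra.
Set Implicit Arguments. Unset Strict Implicit. Unset Printing Implicit Defensive.
Import Order.TTheory GRing.Theory Num.Theory.
Local Open Scope ring_scope.

(* R^{4,2}: row vectors of length 6 with the form diag(1,1,1,1,-1,-1). *)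
Definition lie {R : realFieldType} (x y : 'rV[R]_6) : R :=
  \sum_(i < 6) (if (i < 4)%N then 1 else -1) * x 0 i * y 0 i.

(* homogeneous coordinates of a point of P(L) *)
Definition in_light_cone {R : realFieldType} (x : 'rV[R]_6) : Prop :=
  x != 0 /\ lie x x = 0.

Definition cr {R : realFieldType} (s1 s2 s3 s4 : 'rV[R]_6) : R :=
  lie s1 s2 * lie s3 s4 / (lie s2 s3 * lie s4 s1).

(* Vertices: points of Z^2; V is the vertex set (a subset of Z^2). *)
Definition vtx := (int * int)%type.
Definition sh1 (v : vtx) : vtx := (v.1 + 1, v.2).
Definition sh2 (v : vtx) : vtx := (v.1, v.2 + 1).

(* v = (m,n) is the corner of the face (ijkl) with
   i = (m,n), j = (m+1,n), k = (m+1,n+1), l = (m,n+1) (cyclic order). *)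
Definition is_face (V : vtx -> Prop) (v : vtx) : Prop :=
  V v /\ V (sh1 v) /\ V (sh1 (sh2 v)) /\ V (sh2 v).

Definition is_edge (V : vtx -> Prop) (v w : vtx) : Prop :=
  V v /\ V w /\ (w = sh1 v \/ w = sh2 v).

Definition face_mx {R : realFieldType} (x : vtx -> 'rV[R]_6) (v : vtx) :=
  col_mx (col_mx (x v) (x (sh1 v))) (col_mx (x (sh1 (sh2 v))) (x (sh2 v))).

(* discrete conjugate net: the four coordinate vectors of each face span
   a subspace of dimension at most 3 *)
Definition conjugate_net {R : realFieldType} (V : vtx -> Prop)
  (x : vtx -> 'rV[R]_6) : Prop :=
  forall v, is_face V v -> (\rank (face_mx x v) <= 3)%N.

Definition gram {R : realFieldType} (B : 'M[R]_(3,6)) : 'M[R]_3 :=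
  \matrix_(a < 3, b < 3) lie (row a B) (row b B).

Definition diag21 {R : realFieldType} : 'M[R]_3 :=
  \matrix_(a < 3, b < 3) (if a == b then (if (a == 2 :> nat) then -1 else 1) else 0).
Definition diag12 {R : realFieldType} : 'M[R]_3 :=
  \matrix_(a < 3, b < 3) (if a == b then (if (a == 0 :> nat) then 1 else -1) else 0).

(* the row space of M is 3-dimensional of signature (2,1) or (1,2):
   it has a basis B with Gram matrix diag(1,1,-1) or diag(1,-1,-1) *)
Definition span_sig_21_or_12 {R : realFieldType} {m : nat} (M : 'M[R]_(m,6)) : Prop :=
  exists B : 'M[R]_(3,6), (B == M)%MS /\ (gram B = diag21 \/ gram B = diag12).

(* discrete Ribaucour sphere congruence: non-degenerate discrete conjugate net
   r : V -> P(L) *)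
Definition ribaucour {R : realFieldType} (V : vtx -> Prop) (r : vtx -> 'rV[R]_6) : Prop :=
  (forall v, V v -> in_light_cone (r v)) /\
  conjugate_net V r /\
  (forall v, is_face V v -> span_sig_21_or_12 (face_mx r v)).

(* contact element: a 2-dim totally null subspace, given by a 2 x 6 basis matrix *)
Definition contact_elem {R : realFieldType} (U : 'M[R]_(2,6)) : Prop :=
  \rank U = 2%N /\ (forall a b : 'I_2, lie (row a U) (row b U) = 0).

Definition legendre {R : realFieldType} (V : vtx -> Prop) (f : vtx -> 'M[R]_(2,6)) : Prop :=
  (forall v, V v -> contact_elem (f v)) /\
  (forall v w, is_edge V v w ->
     exists s : 'rV[R]_6, s != 0 /\ (s <= f v)%MS /\ (s <= f w)%MS).

Definition envelops {R : realFieldType} (V : vtx -> Prop) (f : vtx -> 'M[R]_(2,6))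
  (r : vtx -> 'rV[R]_6) : Prop :=
  forall v, V v -> (r v <= f v)%MS.

(* x is (homogeneous coordinates of) the point sphere map of f w.r.t. the
   point sphere complex q: x_v is the point sphere (sphere orthogonal to q)
   contained in f_v *)
Definition point_sphere_map {R : realFieldType} (V : vtx -> Prop) (q : 'rV[R]_6)
  (f : vtx -> 'M[R]_(2,6)) (x : vtx -> 'rV[R]_6) : Prop :=
  forall v, V v -> x v != 0 /\ (x v <= f v)%MS /\ lie (x v) q = 0.

(* circular net of point spheres: the four point spheres of each face
   lie on a circle, i.e. span a subspace of dimension <= 3 *)
Definition circular_net {R : realFieldType} (V : vtx -> Prop) (x : vtx -> 'rV[R]_6) : Prop :=
  conjugate_net V x.

(* totally umbilic discrete Legendre map: all curvature spheres coincide with a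
   constant sphere n, and the point sphere map is a circular net for every
   choice of point sphere complex *)
Definition totally_umbilic {R : realFieldType} (V : vtx -> Prop) (f : vtx -> 'M[R]_(2,6)) : Prop :=
  legendre V f /\
  (exists n : 'rV[R]_6, n != 0 /\
     forall v w, is_edge V v w -> (n <= f v)%MS /\ (n <= f w)%MS) /\
  (forall (q : 'rV[R]_6) (x : vtx -> 'rV[R]_6),
     lie q q = -1 -> point_sphere_map V q f x -> circular_net V x).

Definition face_cr {R : realFieldType} (x : vtx -> 'rV[R]_6) (v : vtx) : R :=
  cr (x v) (x (sh1 v)) (x (sh1 (sh2 v))) (x (sh2 v)).

(* isothermic: planar faces and an edge function a (a1 on edges (v, sh1 v),
   a2 on edges (v, sh2 v)) equal on opposite edges with
   cr(x_i,x_j,x_k,x_l) = a_ij / a_jk *)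
Definition isothermic {R : realFieldType} (V : vtx -> Prop) (x : vtx -> 'rV[R]_6) : Prop :=
  (forall v, V v -> in_light_cone (x v)) /\
  conjugate_net V x /\
  exists a1 a2 : vtx -> R,
    forall v, is_face V v ->
      a1 v = a1 (sh2 v) /\ a2 v = a2 (sh1 v) /\
      face_cr x v = a1 v / a2 (sh1 v).

(* Main.v *)
Require Import Defs.
From mathcomp Require Import all_boot all_order all_algebra ring lra.
Import GRing.Theory Num.Theory.
Local Open Scope ring_scope.
Set Implicit Arguments. Unset Strict Implicit.

Section L.
Variable R : realFieldType.
Implicit Types x y z : 'rV[R]_6.

Lemma lieC x y : lie x y = lie y x.
Proof. by apply: eq_bigr => i _; rewrite mulrAC. Qed.

Lemma lieDl x y z : lie (x + y) z = lie x z + lie y z.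
Proof. rewrite /lie -big_split /=; apply: eq_bigr => i _; rewrite !mxE; set d := (if _ then _ else _); ring. Qed.

Lemma lieZl a x z : lie (a *: x) z = a * lie x z.
Proof. rewrite /lie mulr_sumr; apply: eq_bigr => i _; rewrite !mxE; set d := (if _ then _ else _); ring. Qed.

Lemma lieDr x y z : lie z (x + y) = lie z x + lie z y.
Proof. by rewrite lieC lieDl !(lieC z). Qed.

Lemma lieZr a x z : lie z (a *: x) = a * lie z x.
Proof. by rewrite lieC lieZl lieC. Qed.

Lemma lie0l z : lie 0 z = 0.
Proof. by rewrite -(scale0r (0 : 'rV[R]_6)) lieZl mul0r. Qed.

Lemma lie0r z : lie z 0 = 0.
Proof. by rewrite lieC lie0l. Qed.

Lemma sum6 (F : 'I_6 -> R) : \sum_(i < 6) F i =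
  F (inord 0) + F (inord 1) + F (inord 2) + F (inord 3) + F (inord 4) + F (inord 5).
Proof.
rewrite !big_ord_recl big_ord0 addr0 !addrA.
by repeat (congr (_ + _)); congr F; apply/val_inj; rewrite /= inordK.
Qed.

Lemma lieE x y : lie x y = x 0 (inord 0) * y 0 (inord 0) + x 0 (inord 1) * y 0 (inord 1)
  + x 0 (inord 2) * y 0 (inord 2) + x 0 (inord 3) * y 0 (inord 3)
  - x 0 (inord 4) * y 0 (inord 4) - x 0 (inord 5) * y 0 (inord 5).
Proof. rewrite /lie sum6 !inordK //=; ring. Qed.

Lemma row2E (w : 'rV[R]_2) (U : 'M[R]_(2,6)) :
  w *m U = w 0 0 *: row 0 U + w 0 1 *: row 1 U.
Proof.
rewrite mulmx_sum_row !big_ord_recl big_ord0 addr0.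
have E1 : lift ord0 ord0 = 1 :> 'I_2 by apply/val_inj.
by rewrite E1. Qed.

Lemma null_sub (U : 'M[R]_(2,6)) a b : contact_elem U ->
  (a <= U)%MS -> (b <= U)%MS -> lie a b = 0.
Proof.
case=> _ H /submxP [wa ->] /submxP [wb ->].
rewrite !row2E !(lieDl, lieDr, lieZl, lieZr) !H; ring.
Qed.

Lemma row1E (c : 'M[R]_1) x : c *m x = c 0 0 *: x.
Proof. by rewrite {1}(mx11_scalar c) mul_scalar_mx. Qed.

Definition orth x m (M : 'M[R]_(m,6)) := forall y, (y <= M)%MS -> lie x y = 0.

Lemma orth_row x y : lie x y = 0 -> orth x y.
Proof. by move=> H z /submxP [c ->]; rewrite row1E lieZr H mulr0. Qed.

Lemma orth_col x m1 m2 (A : 'M[R]_(m1,6)) (B : 'M[R]_(m2,6)) :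
  orth x A -> orth x B -> orth x (col_mx A B).
Proof.
move=> HA HB y; rewrite -addsmxE => /sub_addsmxP [[u1 u2] /= ->].
by rewrite lieDr HA ?HB ?addr0 // submxMl.
Qed.

Lemma sub_col_l m1 m2 (A : 'M[R]_(m1,6)) (B : 'M[R]_(m2,6)) : (A <= col_mx A B)%MS.
Proof. by rewrite -addsmxE addsmxSl. Qed.
Lemma sub_col_r m1 m2 (A : 'M[R]_(m1,6)) (B : 'M[R]_(m2,6)) : (B <= col_mx A B)%MS.
Proof. by rewrite -addsmxE addsmxSr. Qed.


Lemma decomp (U : 'M[R]_(2,6)) n r x : (n <= U)%MS -> (r <= U)%MS -> (x <= U)%MS ->
  n != 0 -> (forall l, r != l *: n) -> exists a b, x = a *: n + b *: r.
Proof.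
move=> /submxP [a ->] /submxP [c ->] /submxP [e ->] Hn Hr.
rewrite !row2E in Hn Hr *.
set U0 := row 0 U; set U1 := row 1 U.
have [D0|DN] := eqVneq (a 0 0 * c 0 1 - a 0 1 * c 0 0) 0.
  have [A0|A0] := eqVneq (a 0 0) 0.
    have [A1|A1] := eqVneq (a 0 1) 0.
      by move: Hn; rewrite A0 A1 !scale0r addr0 eqxx.
    have C0 : c 0 0 = 0.
      have : a 0 1 * c 0 0 = 0 by rewrite -[RHS]oppr0 -D0 A0; ring.
      by move/eqP; rewrite mulf_eq0 (negPf A1) => /eqP.
    case/eqP: (Hr (c 0 1 / a 0 1)); apply/rowP => jj; rewrite !mxE A0 C0; by field.
  case/eqP: (Hr (c 0 0 / a 0 0)); apply/rowP => jj; rewrite !mxE.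
  have E : c 0 1 = c 0 0 * a 0 1 / a 0 0.
    apply: (mulfI A0); rewrite -[LHS]subr0 -D0; by field.
  rewrite E; by field.
exists ((e 0 0 * c 0 1 - e 0 1 * c 0 0) / (a 0 0 * c 0 1 - a 0 1 * c 0 0)).
exists ((a 0 0 * e 0 1 - a 0 1 * e 0 0) / (a 0 0 * c 0 1 - a 0 1 * c 0 0)).
apply/rowP => jj; rewrite !mxE; by field.
Qed.


Lemma rowE6 (z : 'rV[R]_6) : (forall k, (k < 6)%N -> z 0 (inord k) = 0) -> z = 0.
Proof.
move=> H; apply/rowP => jj; rewrite mxE -[jj]inord_val; apply: H; exact: ltn_ord.
Qed.

Lemma lemZ z p : lie z z = 0 -> lie z p = 0 -> lie p p = -1 ->
  z 0 (inord 4) * p 0 (inord 5) = z 0 (inord 5) * p 0 (inord 4) -> z = 0.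
Proof.
rewrite !lieE => Hzz Hzp Hpp Hd.
set z0 := z 0 (inord 0) in Hzz Hzp *; set z1 := z 0 (inord 1) in Hzz Hzp *;
set z2 := z 0 (inord 2) in Hzz Hzp *; set z3 := z 0 (inord 3) in Hzz Hzp *;
set z4 := z 0 (inord 4) in Hzz Hzp Hd *; set z5 := z 0 (inord 5) in Hzz Hzp Hd *.
set p0 := p 0 (inord 0) in Hpp Hzp *; set p1 := p 0 (inord 1) in Hpp Hzp *;
set p2 := p 0 (inord 2) in Hpp Hzp *; set p3 := p 0 (inord 3) in Hpp Hzp *;
set p4 := p 0 (inord 4) in Hpp Hzp Hd *; set p5 := p 0 (inord 5) in Hpp Hzp Hd *.
have s0 : p4 ^+ 2 + p5 ^+ 2 != 0.
  apply/eqP => s0.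
  have : p0 ^+ 2 + p1 ^+ 2 + p2 ^+ 2 + p3 ^+ 2 + 1 = 0.
    rewrite -[RHS]s0 -[1]opprK -Hpp; ring.
  apply/eqP; rewrite lt0r_neq0 // ltr_pwDr ?ltr01 //; nra.
set t := (z4 * p4 + z5 * p5) / (p4 ^+ 2 + p5 ^+ 2).
have E4 : z4 = t * p4.
  have -> : t * p4 = (z4 * p4 * p4 + (z5 * p4) * p5) / (p4 ^+ 2 + p5 ^+ 2).
    by rewrite /t; field.
  rewrite -Hd; by field.
have E5 : z5 = t * p5.
  have -> : t * p5 = ((z4 * p5) * p4 + z5 * p5 * p5) / (p4 ^+ 2 + p5 ^+ 2).
    by rewrite /t; field.
  rewrite Hd; by field.
have key : (z0 - t * p0) ^+ 2 + (z1 - t * p1) ^+ 2 + (z2 - t * p2) ^+ 2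
   + (z3 - t * p3) ^+ 2 + t ^+ 2 = 0.
  have -> : (z0 - t * p0) ^+ 2 + (z1 - t * p1) ^+ 2 + (z2 - t * p2) ^+ 2
   + (z3 - t * p3) ^+ 2 + t ^+ 2 =
   (z0 * z0 + z1 * z1 + z2 * z2 + z3 * z3 - z4 * z4 - z5 * z5)
   - 2 * t * (z0 * p0 + z1 * p1 + z2 * p2 + z3 * p3 - z4 * p4 - z5 * p5)
   + t ^+ 2 * ((p0 * p0 + p1 * p1 + p2 * p2 + p3 * p3 - p4 * p4 - p5 * p5) + 1)
   + (z4 - t * p4) ^+ 2 + (z5 - t * p5) ^+ 2 by ring.
  rewrite Hzz Hzp Hpp -E4 -E5; ring.
move/eqP: key; rewrite !paddr_eq0 ?addr_ge0 ?sqr_ge0 // !sqrf_eq0 !subr_eq0.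
case/andP=> /andP [/andP [/andP [/eqP Q0 /eqP Q1] /eqP Q2] /eqP Q3] /eqP t0.
move: Q0 Q1 Q2 Q3 E4 E5; rewrite t0 !mul0r => Q0 Q1 Q2 Q3 E4 E5.
apply: rowE6 => k Hk.
do 6?[case: k Hk => [|k] Hk]; try by [].
Qed.


Lemma sig_lemma x y p : lie x x = 0 -> lie y y = 0 -> lie x y = 0 ->
  lie x p = 0 -> lie y p = 0 -> lie p p = -1 ->
  exists b c : R, (b != 0 \/ c != 0) /\ b *: x + c *: y = 0.
Proof.
move=> Hxx Hyy Hxy Hxp Hyp Hpp.
pose d (a : 'rV[R]_6) := a 0 (inord 4) * p 0 (inord 5) - a 0 (inord 5) * p 0 (inord 4).
have [Dx|Dx] := eqVneq (d x) 0.
  exists 1, 0; split; first by left; exact: oner_neq0.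
  rewrite scale0r addr0 scale1r; apply: (lemZ Hxx Hxp Hpp).
  by apply/eqP; rewrite -subr_eq0; apply/eqP.
exists (d y), (- d x); split; first by right; rewrite oppr_eq0.
have Hl : forall u v, lie (d y *: x + (- d x) *: y) (u *: x + v *: y) = 0.
  by move=> u v; rewrite !(lieDl, lieDr, lieZl, lieZr) (lieC y x) Hxx Hyy Hxy; ring.
apply: (lemZ _ _ Hpp).
- by rewrite Hl.
- rewrite !(lieDl, lieZl) Hxp Hyp; ring.
- rewrite !mxE /d; ring.
Qed.


Lemma lie_suml (I : finType) (F : I -> 'rV[R]_6) z :
  lie (\sum_i F i) z = \sum_i lie (F i) z.
Proof.
exact: (big_morph (fun a => lie a z) (fun a b => lieDl a b z) (lie0l z)).
Qed.

Lemma nondeg m (M : 'M[R]_(m,6)) x : span_sig_21_or_12 M -> (x <= M)%MS -> orth x M -> x = 0.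
Proof.
case=> B [/andP [BM MB] Hg] xM Ho.
have /submxP [y xE] : (x <= B)%MS by apply: submx_trans MB.
subst x.
suff -> : y = 0 by rewrite mul0mx.
apply/rowP => b; rewrite mxE.
have : lie (y *m B) (row b B) = 0.
  by apply: Ho; apply: submx_trans BM; apply: row_sub.
rewrite mulmx_sum_row lie_suml (bigD1 b) //= big1 ?addr0 => [|a /negPf nab]; last first.
  rewrite lieZl (_ : lie _ _ = gram B a b); last by rewrite mxE.
  by case: Hg => ->; rewrite mxE nab mulr0.
rewrite lieZl (_ : lie _ _ = gram B b b); last by rewrite mxE.
case: Hg => -> ; rewrite mxE eqxx; case: ifP => _ /eqP;
  rewrite ?mulrN1 ?mulr1 ?oppr_eq0 => /eqP //.
Qed.


Definition good (U : 'M[R]_(2,6)) (r up n p : 'rV[R]_6) := contact_elem U /\ (r <= U)%MS /\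
  (up <= U)%MS /\ (n <= U)%MS /\ r != 0 /\ up != 0 /\ lie up p = 0.

Lemma good_nr U r up n p : good U r up n p -> lie n r = 0.
Proof. by case=> C [rU [_ [nU _]]]; apply: (null_sub C). Qed.

Lemma V1 U r up n p : good U r up n p -> n != 0 -> (forall l, r != l *: n) ->
  lie n p != 0 -> exists a b, b != 0 /\ up = a *: n + b *: r.
Proof.
case=> C [rU [uU [nU [r0 [u0 up0]]]]] n0 nd np.
have [a [b E]] := decomp nU rU uU n0 nd.
exists a, b; split => //; apply/eqP => b0.
move: up0; rewrite E b0 scale0r addr0 lieZl => /eqP; rewrite mulf_eq0 (negPf np) orbF.
by move/eqP => a0; move: u0; rewrite E a0 b0 !scale0r addr0 eqxx.
Qed.

Lemma V2 U r up n p : good U r up n p -> n != 0 -> (forall l, r != l *: n) ->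
  lie n p = 0 -> lie p p = -1 -> (up <= n)%MS.
Proof.
case=> C [rU [uU [nU [r0 [u0 up0]]]]] n0 nd np pp.
have [a [b E]] := decomp nU rU uU n0 nd.
have [b0|b0] := eqVneq b 0.
  by rewrite E b0 scale0r addr0 scalemx_sub.
have rp : lie r p = 0.
  move: up0; rewrite E lieDl !lieZl np mulr0 add0r => /eqP.
  by rewrite mulf_eq0 (negPf b0) => /eqP.
have [c [d [cd E2]]] := sig_lemma (null_sub C nU nU) (null_sub C rU rU)
   (null_sub C nU rU) np rp pp.
have [d0|d0] := eqVneq d 0.
  move: E2 cd; rewrite d0 scale0r addr0 => /eqP; rewrite scaler_eq0 (negPf n0) orbF.
  by move=> /eqP -> [] /eqP.
case/eqP: (nd (- c / d)); apply: (scalerI d0).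
rewrite scalerA mulrC divfK // scaleNr.
by apply/eqP; rewrite -addr_eq0 addrC E2.
Qed.

Lemma V3 m (M : 'M[R]_(m,6)) r n : r != 0 -> span_sig_21_or_12 M -> (r <= M)%MS ->
  orth n M -> forall l, r != l *: n.
Proof.
move=> r0 HM rM On l; apply/eqP => E.
have : r = 0.
  apply: (nondeg HM rM) => y yM; rewrite E lieZl On ?mulr0 //.
by move/eqP: r0.
Qed.

Lemma cr_scale r0 r1 r2 r3 u0 u1 u2 u3 (b0 b1 b2 b3 : R) :
  b0 != 0 -> b1 != 0 -> b2 != 0 -> b3 != 0 ->
  lie u0 u1 = b0 * b1 * lie r0 r1 -> lie u2 u3 = b2 * b3 * lie r2 r3 ->
  lie u1 u2 = b1 * b2 * lie r1 r2 -> lie u3 u0 = b3 * b0 * lie r3 r0 ->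
  cr r0 r1 r2 r3 = cr u0 u1 u2 u3.
Proof.
move=> h0 h1 h2 h3 e1 e2 e3 e4; rewrite /cr e1 e2 e3 e4.
have [D|D] := eqVneq (lie r1 r2 * lie r3 r0) 0.
  have -> : b1 * b2 * lie r1 r2 * (b3 * b0 * lie r3 r0) = 0.
    by rewrite -[RHS](mulr0 (b0 * b1 * b2 * b3)) -D; ring.
  by rewrite D !invr0 !mulr0.
have D1 : lie r1 r2 != 0 by apply: contraNneq D => ->; rewrite mul0r.
have D2 : lie r3 r0 != 0 by apply: contraNneq D => ->; rewrite mulr0.
by field; rewrite D1 D2 h0 h1 h2 h3.
Qed.


Lemma pairE n r r' (a b a' b' : R) : lie n n = 0 -> lie n r = 0 -> lie n r' = 0 ->
  lie (a *: n + b *: r) (a' *: n + b' *: r') = b * b' * lie r r'.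
Proof.
move=> h1 h2 h3; rewrite !(lieDl, lieDr, lieZl, lieZr) h1 h3 (lieC r n) h2; ring.
Qed.

Lemma good_nn U r up n p : good U r up n p -> lie n n = 0.
Proof. by case=> C [_ [_ [nU _]]]; apply: (null_sub C). Qed.

Lemma good_r0 U r up n p : good U r up n p -> r != 0.
Proof. by case=> _ [_ [_ [_ []]]]. Qed.

Lemma face_main (r0 r1 r2 r3 u0 u1 u2 u3 n p : 'rV[R]_6) (U0 U1 U2 U3 : 'M[R]_(2,6)) :
  good U0 r0 u0 n p -> good U1 r1 u1 n p -> good U2 r2 u2 n p -> good U3 r3 u3 n p ->
  n != 0 -> lie p p = -1 ->
  span_sig_21_or_12 (col_mx (col_mx r0 r1) (col_mx r2 r3)) ->
  (1 < \rank (col_mx (col_mx u0 u1) (col_mx u2 u3)))%N ->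
  cr r0 r1 r2 r3 = cr u0 u1 u2 u3.
Proof.
move=> G0 G1 G2 G3 n0 pp HM Hrk.
have On : orth n (col_mx (col_mx r0 r1) (col_mx r2 r3)).
  by do 2!apply: orth_col; apply: orth_row; apply: good_nr; eassumption.
have nd0 := V3 (good_r0 G0) HM (submx_trans (sub_col_l r0 r1) (sub_col_l _ _)) On.
have nd1 := V3 (good_r0 G1) HM (submx_trans (sub_col_r r0 r1) (sub_col_l _ _)) On.
have nd2 := V3 (good_r0 G2) HM (submx_trans (sub_col_l r2 r3) (sub_col_r _ _)) On.
have nd3 := V3 (good_r0 G3) HM (submx_trans (sub_col_r r2 r3) (sub_col_r _ _)) On.
have np : lie n p != 0.
  apply/eqP => np.
  have S : (col_mx (col_mx u0 u1) (col_mx u2 u3) <= n)%MS.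
    by rewrite !col_mx_sub (V2 G0) ?(V2 G1) ?(V2 G2) ?(V2 G3).
  move: (leq_trans (mxrankS S) (rank_leq_row n)).
  by rewrite leqNgt Hrk.
have [a0 [b0 [h0 E0]]] := V1 G0 n0 nd0 np.
have [a1 [b1 [h1 E1]]] := V1 G1 n0 nd1 np.
have [a2 [b2 [h2 E2]]] := V1 G2 n0 nd2 np.
have [a3 [b3 [h3 E3]]] := V1 G3 n0 nd3 np.
have nn := good_nn G0.
apply: (cr_scale h0 h1 h2 h3); rewrite ?E0 ?E1 ?E2 ?E3 pairE //; apply: good_nr; eassumption.
Qed.

End L.

Unset Implicit Arguments.
Set Strict Implicit.

Theorem mainTheorem18 (R : realFieldType) (V : vtx -> Prop)
  (r : vtx -> 'rV[R]_6) (u : vtx -> 'M[R]_(2,6))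
  (p : 'rV[R]_6) (up : vtx -> 'rV[R]_6) :
  ribaucour V r ->
  totally_umbilic V u ->
  envelops V u r ->
  lie p p = -1 ->
  point_sphere_map V p u up ->
  (forall v, is_face V v -> (1 < \rank (face_mx up v))%N) ->
  (forall v, is_face V v -> face_cr r v = face_cr up v) /\
  (isothermic V up <-> isothermic V r).
Proof.
move=> [Hrl [Hrc Hrs]] [[Hleg _] [[n [n0 Hn]] Hcirc]] Henv pp Hps Hrank.
have Hgood : forall w, V w -> (n <= u w)%MS -> good (u w) (r w) (up w) n p.
  move=> w Vw nw; have [upn [upU upp]] := Hps w Vw.
  by split; [exact: Hleg | split; [exact: Henv | do 3?split => //; case: (Hrl w Vw)]].
have Hface : forall v, is_face V v -> face_cr r v = face_cr up v.
  move=> v Fv; case: (Fv) => [V0 [V1 [V2 V3]]].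
  have [nA nB] := Hn v (sh1 v) (conj V0 (conj V1 (or_introl erefl))).
  have [nC nD] := Hn (sh2 v) (sh1 (sh2 v)) (conj V3 (conj V2 (or_introl erefl))).
  exact: (face_main (Hgood _ V0 nA) (Hgood _ V1 nB) (Hgood _ V2 nD) (Hgood _ V3 nC)
     n0 pp (Hrs v Fv) (Hrank v Fv)).
split => //; split.
- case=> _ [_ [a1 [a2 H]]]; split; first exact: Hrl.
  split; first exact: Hrc.
  by exists a1, a2 => v Fv; rewrite Hface //; apply: H.
- case=> _ [_ [a1 [a2 H]]]; split.
    move=> w Vw; have [upn [upU upp]] := Hps w Vw; split => //.
    exact: (null_sub (Hleg w Vw)).
  split; first exact: (Hcirc p up pp Hps).
  by exists a1, a2 => v Fv; rewrite -Hface //; apply: H.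
Qed.
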